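(* Let $1\le i\le N$ and $w_1,w_2\in\mathcal A_i$ with $w_1\ne w_2$, and let $w_1^{-1}w_2=\prod_{\ell=1}^dA_{i_\ell,j_\ell}^{(k_\ell)}$, $d\ge1$, be the reduced representation of $w_1^{-1}w_2$. Then, as power series in $\lambda$ (in particular for all $|\lambda|\le1$), $$\mathcal R(w_1,w_2;\lambda)=\prod_{\ell=1}^dR_{i_\ell,j_\ell}^{(k_\ell)}(\lambda).$$
   Context: Fix an integer $N\ge 3$. Let $\mathcal G_N$ be the groupoid with object set $\{1,\dots,N\}$ generated by arrows $A_{i,j}^{(k)}$, $i\neq j\in\{1,\dots,N\}$, $k\in\{-1,1\}$, with source $i$ and target $j$, subject to the relations $A_{i,j}^{(k)}A_{j,\ell}^{(k)}=A_{i,\ell}^{(k)}$ for all $i,j,\ell$, $k$, with the convention $A_{i,i}^{(k)}:=e_i$ (unit at object $i$). Let $\mathcal A$ be its arrow set and $\mathcal A_i$ the set of arrows with source $i$. Every arrow has a unique reduced representation: either empty or $A_{i_1,i_2}^{(k)}A_{i_2,i_3}^{(-k)}\cdots A_{i_d,i_{d+1}}^{((-1)^{d+1}k)}$ with $d\ge1$, $i_\ell\ne i_{\ell+1}$. Let $\{W_n\}_{n\ge0}$ be the Markov chain on $\mathcal A$ with $P(W_{n+1}=y\mid W_n=x)=p_{i,j}^{(k)}$ if $x^{-1}y=A_{i,j}^{(k)}$ with $i\ne j$ and $0$ otherwise, where $p_{i,j}^{(k)}\in(0,1)$ and $\sum_{j\ne i}\sum_{k=\pm1}p_{i,j}^{(k)}=1$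 for each $i$; $P_x,E_x$ denote law and expectation with $W_0=x$. For $y\in\mathcal A$ let $\tau_y=\inf\{n\ge0:W_n=y\}$ and $\mathcal R(x,y;\lambda)=\sum_{n\ge0}P_x(\tau_y=n)\lambda^n$. For $x\in\mathcal A$ let $T(0,x)=\inf\{n\ge0:W_n=W_0x\}$ (possibly $\infty$) and $R_{i,j}^{(k)}(\lambda)=E_{e_i}[\lambda^{T(0,A_{i,j}^{(k)})}]$. *)

(* Defs.v *)
From HB Require Import structures.
From mathcomp Require Import all_boot all_order all_algebra.
From mathcomp Require Import all_classical all_reals all_analysis.
Set Implicit Arguments. Unset Strict Implicit. Unset Printing Implicit Defensive.
Import Order.TTheory GRing.Theory Num.Theory numFieldNormedType.Exports.
Local Open Scope ring_scope.

(* A sign k in {-1,1} is encoded as a bool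
   (true <-> k = 1, false <-> k = -1).  A letter (j, k) stands for the
   generator A_{t,j}^{(k)}, where t is the current target.
   An arrow is a pair (s, u) : source s and a word u of letters
   [:: (i_2,k); (i_3,-k); ...; (i_{d+1}, ...)] encoding
   A_{s,i_2}^{(k)} A_{i_2,i_3}^{(-k)} ... ; the empty word is e_s. *)
Definition letter N := ('I_N * bool)%type.
Definition arrow N := ('I_N * seq (letter N))%type.

Section Groupoid.
Variable N : nat.

Fixpoint red_from (t : 'I_N) (prevk : option bool) (u : seq (letter N)) : bool :=
  match u with
  | [::] => true
  | a :: u' => [&& a.1 != t,
                  (if prevk is Some k0 then a.2 != k0 else true)
                & red_from a.1 (Some a.2) u']
  end.

Definition reduced (w : arrow N) : bool := red_from w.1 None w.2.

Definition src (w : arrow N) : 'I_N := w.1.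
Definition tgt (w : arrow N) : 'I_N := last w.1 (map fst w.2).

Definition unit_arrow (i : 'I_N) : arrow N := (i, [::]).

(* right multiplication of an arrow x by the generator A_{tgt x, a.1}^{(a.2)}
   (meaningful when a.1 != tgt x), using A^{(k)}_{i,j} A^{(k)}_{j,l} = A^{(k)}_{i,l},
   A^{(k)}_{i,i} = e_i, and returning the reduced representation. *)
Definition mulgen (x : arrow N) (a : letter N) : arrow N :=
  let: (s, u) := x in
  match rev u with
  | (t, k0) :: ru0 =>
      if k0 == a.2 then
        let u0 := rev ru0 in
        if last s (map fst u0) == a.1 then (s, u0) else (s, rcons u0 a)
      else (s, rcons u a)
  | [::] => (s, [:: a])
  end.

Definition arrow_mul (x : arrow N) (u : seq (letter N)) : arrow N :=
  foldl mulgen x u.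

Variable R : realType.
Variable p : 'I_N -> 'I_N -> bool -> R.

(* probability weight of performing the successive steps s from x:
   the step (j,k) from the current state W has probability p_{tgt W, j}^{(k)}
   if j != tgt W and 0 otherwise; W_{n+1} = W_n A_{tgt W_n, j}^{(k)}. *)
Fixpoint wpath (x : arrow N) (s : seq (letter N)) : R :=
  match s with
  | [::] => 1
  | a :: s' => (if a.1 != tgt x then p (tgt x) a.1 a.2 else 0) * wpath (mulgen x a) s'
  end.

Fixpoint firsthit (x y : arrow N) (s : seq (letter N)) : bool :=
  match s with
  | [::] => x == y
  | a :: s' => (x != y) && firsthit (mulgen x a) y s'
  end.

Definition hit_prob (x y : arrow N) (n : nat) : R :=
  \sum_(s : n.-tuple (letter N)) wpath x s * (firsthit x y s)%:R.

(* coefficient of lambda^n in R(x,y;lambda) = sum_n P_x(tau_y = n) lambda^n *)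
Definition calR_coef (x y : arrow N) (n : nat) : R := hit_prob x y n.

(* P_{e_i}(T(0, A_{i,j}^{(k)}) = n), with T(0,x) = inf{n : W_n = W_0 x}:
   coefficient of lambda^n in R_{i,j}^{(k)}(lambda) *)
Definition Rgen_coef (i : 'I_N) (a : letter N) (n : nat) : R :=
  hit_prob (unit_arrow i) (arrow_mul (unit_arrow i) [:: a]) n.

Fixpoint factors (t : 'I_N) (u : seq (letter N)) : seq ('I_N * letter N) :=
  match u with
  | [::] => [::]
  | a :: u' => (t, a) :: factors a.1 u'
  end.

End Groupoid.

(* formal power series: coefficient sequences, Cauchy product *)
Definition ps_one (R : realType) : nat -> R := fun n => (n == 0%N)%:R.
Definition ps_mul (R : realType) (a b : nat -> R) : nat -> R :=
  fun n => \sum_(m < n.+1) a m * b (n - m)%N.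
Definition ps_prod (R : realType) (l : seq (nat -> R)) : nat -> R :=
  foldr (@ps_mul R) (@ps_one R) l.

Definition ps_terms (R : realType) (a : nat -> R) (lam : R) : R ^nat :=
  fun n => a n * lam ^+ n.
Definition ps_eval (R : realType) (a : nat -> R) (lam : R) : R :=
  limn (series (ps_terms a lam)).

(* Main.v *)
Require Import Defs.
From HB Require Import structures.
From mathcomp Require Import all_boot all_order all_algebra.
From mathcomp Require Import all_classical all_reals all_analysis.
Import Order.TTheory GRing.Theory Num.Theory numFieldNormedType.Exports.
Set Implicit Arguments. Unset Strict Implicit. Unset Printing Implicit Defensive.

Section G.
Variable N : nat.
Implicit Types (x y g h X V Y : arrow N) (a b l : letter N) (w v : seq (letter N)) (t s : 'I_N).

Definition lastsign (o : option bool) (w : seq (letter N)) :=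
  last o (map (fun l : letter N => Some l.2) w).

Lemma red_from_cat t o w v : red_from t o (w ++ v) =
  red_from t o w && red_from (last t (map fst w)) (lastsign o w) v.
Proof.
elim: w t o => [|b w IH] t o //=.
by rewrite IH !andbA.
Qed.

Lemma red_from_rcons t o w l : red_from t o (rcons w l) =
  [&& red_from t o w, l.1 != last t (map fst w) &
      (if lastsign o w is Some k0 then l.2 != k0 else true)].
Proof.
rewrite -cats1 red_from_cat /=; case: (lastsign o w) => [k0|] /=;
by rewrite ?andbT.
Qed.

Lemma lastsign_rcons o w l : lastsign o (rcons w l) = Some l.2.
Proof. by rewrite /lastsign map_rcons last_rcons. Qed.

Lemma red_from_None t o w : red_from t o w -> red_from t None w.
Proof. by case: w => [|b w] //= /and3P[-> _ ->]. Qed.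

Lemma mulgen_nil s a : mulgen (s, [::]) a = (s, [:: a]).
Proof. by []. Qed.

Lemma mulgen_rcons s w q k a : mulgen (s, rcons w (q, k)) a =
  if k == a.2 then (if last s (map fst w) == a.1 then (s, w) else (s, rcons w a))
  else (s, rcons (rcons w (q, k)) a).
Proof. by rewrite /mulgen rev_rcons revK. Qed.

Lemma tgt_mulgen x a : tgt (mulgen x a) = a.1.
Proof.
case: x => s u; case/lastP: u => [|w [q k]]; rewrite ?mulgen_rcons /tgt //=.
case: ifP => _; last by rewrite map_rcons last_rcons.
case: eqP => [//|_]; by rewrite map_rcons last_rcons.
Qed.

Lemma src_mulgen x a : (mulgen x a).1 = x.1.
Proof.
case: x => s u; case/lastP: u => [|w [q k]]; rewrite ?mulgen_rcons //=.
by case: ifP => _ //; case: ifP.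
Qed.

Lemma tgt_arrow_mul x v : tgt (arrow_mul x v) = last (tgt x) (map fst v).
Proof.
elim: v x => [|b v IH] x //=.
by rewrite /arrow_mul /= -/(arrow_mul _ _) IH tgt_mulgen.
Qed.

Lemma src_arrow_mul x v : (arrow_mul x v).1 = x.1.
Proof.
elim: v x => [|b v IH] x //=.
by rewrite /arrow_mul /= -/(arrow_mul _ _) IH src_mulgen.
Qed.

Lemma arrow_mul_cons x b v : arrow_mul x (b :: v) = arrow_mul (mulgen x b) v.
Proof. by []. Qed.

Lemma arrow_mul_rcons x v b : arrow_mul x (rcons v b) = mulgen (arrow_mul x v) b.
Proof. by rewrite /arrow_mul foldl_rcons. Qed.

Lemma reduced_mulgen x a : reduced x -> a.1 != tgt x -> reduced (mulgen x a).
Proof.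
case: x => s u; case/lastP: u => [|w [q k]].
  by rewrite /reduced /tgt /= => _ ->.
rewrite mulgen_rcons /reduced /tgt /= red_from_rcons map_rcons last_rcons /=.
case/and3P=> Hw Hq Hk Ha.
case: eqP => [Ek|Nk].
  case: eqP => [_|Nl] //=.
  rewrite red_from_rcons Hw /=; apply/andP; split; first by apply/eqP => E; apply: Nl; rewrite E.
  by case: (lastsign None w) Hk => // k0; rewrite Ek.
rewrite red_from_rcons red_from_rcons Hw Hq Hk /= map_rcons last_rcons Ha.
by rewrite lastsign_rcons /=; apply/eqP => E; apply: Nk; rewrite E.
Qed.

Lemma reduced_arrow_mul x v o : reduced x -> red_from (tgt x) o v ->
  reduced (arrow_mul x v).
Proof.
elim: v x o => [|b v IH] x o Hx; first by [].
move=> /and3P[Hb _ Hv]; rewrite arrow_mul_cons; apply: (IH _ (Some b.2)); first exact: reduced_mulgen.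
by rewrite tgt_mulgen.
Qed.

Lemma arrow_mul_app s w v : red_from s None (w ++ v) -> arrow_mul (s, w) v = (s, w ++ v).
Proof.
elim: v w => [|b v IH] w; first by rewrite cats0.
move=> H; rewrite arrow_mul_cons.
have Hb : red_from s None (rcons w b) by move: H; rewrite -cat_rcons red_from_cat => /andP[].
have -> : mulgen (s, w) b = (s, rcons w b).
  case/lastP: w H Hb => [|w [q k]] // _.
  rewrite mulgen_rcons red_from_rcons lastsign_rcons => /and3P[_ _ Hk].
  by rewrite eq_sym (negbTE Hk).
by rewrite IH cat_rcons.
Qed.

Lemma mulgen2 X r j k : reduced X -> r != tgt X -> j != r ->
  mulgen (mulgen X (r, k)) (j, k) = if j == tgt X then X else mulgen X (j, k).
Proof.
case: X => s xw; case/lastP: xw => [|x0 [q k1]].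
  move=> _ Hr Hj.
  rewrite mulgen_nil -[[:: (r, k)]]/(rcons [::] (r, k)) mulgen_rcons eqxx /=.
  case: eqP => [E|Nsj].
    by subst; rewrite /tgt /= eqxx.
  rewrite /tgt /=; case: eqP => [E|//].
  by case: Nsj; rewrite E.
move=> HX Hr Hj.
have := HX; rewrite /reduced red_from_rcons => /and3P[Hx0 Hq Hk1]; simpl in Hx0, Hq, Hk1.
have Eq : tgt (s, rcons x0 (q, k1)) = q by rewrite /tgt map_rcons last_rcons.
rewrite Eq in Hr *; clear Eq.
rewrite (mulgen_rcons s x0 q k1 (r, k)) (mulgen_rcons s x0 q k1 (j, k)).
rewrite [(r, k).2]/= [(j, k).2]/= [(r, k).1]/= [(j, k).1]/=.
case: (k1 =P k) => [Ek1|Nk1].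
  subst k1.
  case: (last s (map fst x0) =P r) => [Ep|Np].
    case/lastP: x0 HX Hx0 Hq Hk1 Ep => [|x00 [p0 k2]] HX Hx0 Hq Hk1 Ep.
      rewrite mulgen_nil.
      case: (j =P q) => [->|Njq] //.
      by case: (last s [::] =P j) => // Esj; move: Hj; rewrite -Ep Esj eqxx.
    rewrite mulgen_rcons.
    move: Hk1; rewrite lastsign_rcons => Hk2.
    rewrite [k2 == k]eq_sym (negbTE Hk2).
    case: (j =P q) => [->|Njq] //.
    by rewrite Ep eq_sym (negbTE Hj).
  rewrite mulgen_rcons eqxx [(j, k).1]/=.
  case: (j =P q) => [Ejq|Njq].
    by subst j; rewrite eq_sym (negbTE Hq).
  by [].
rewrite mulgen_rcons eqxx map_rcons last_rcons [(j, k).1]/=.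
case: (q =P j) => [->|Nqj]; first by rewrite eqxx.
case: (j =P q) => [E|_]; first by case: Nqj.
by [].
Qed.


Definition Lg g V := arrow_mul g V.2.

Lemma tgt_Lg g V : V.1 = tgt g -> tgt (Lg g V) = tgt V.
Proof. by case: V => t v /= ->; rewrite /Lg tgt_arrow_mul. Qed.

Lemma LM g V b : reduced g -> reduced V -> V.1 = tgt g -> b.1 != tgt V ->
  Lg g (mulgen V b) = mulgen (Lg g V) b.
Proof.
case: V => t v; case/lastP: v => [|v0 [r k]]; first by [].
move=> Hg HV Ht Hb; simpl in Ht.
have := HV; rewrite /reduced red_from_rcons => /and3P[Hv0 Hr Hk]; simpl in Hv0, Hr, Hk.
have Htgt : tgt (t, rcons v0 (r, k)) = r by rewrite /tgt map_rcons last_rcons.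
rewrite Htgt in Hb.
set X := arrow_mul g v0.
have HX : reduced X by apply: (reduced_arrow_mul (o := None)) => //; rewrite -Ht.
have HtX : tgt X = last t (map fst v0) by rewrite /X tgt_arrow_mul Ht.
have E1 : Lg g (t, rcons v0 (r, k)) = mulgen X (r, k) by rewrite /Lg arrow_mul_rcons.
rewrite E1 mulgen_rcons.
case: b Hb => j kb /= Hb.
case: (k =P kb) => [Ek|Nk].
  subst kb.
  rewrite (mulgen2 _ HX) ?HtX //.
  case: (last t (map fst v0) =P j) => [E|N1].
    by rewrite E eqxx.
  rewrite eq_sym; case: eqP => [E|_]; first by case: N1.
  by rewrite /Lg /= arrow_mul_rcons.
by rewrite /Lg /= !arrow_mul_rcons.
Qed.

Lemma LMfold h X v o : reduced h -> reduced X -> X.1 = tgt h -> red_from (tgt X) o v ->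
  Lg h (arrow_mul X v) = arrow_mul (Lg h X) v.
Proof.
elim: v X o => [|b v IH] X o Hh HX HXs; first by [].
move=> /and3P[Hb _ Hv].
rewrite !arrow_mul_cons -LM //.
apply: (IH _ (Some b.2)) => //.
- exact: reduced_mulgen.
- by rewrite src_mulgen.
- by rewrite tgt_mulgen.
Qed.

Lemma exists_inv g : reduced g -> exists h,
  [/\ reduced h, h.1 = tgt g, tgt h = g.1 & Lg h g = (tgt g, [::])].
Proof.
case: g => s gw; elim/last_ind: gw => [|g0 [j k] IH] Hg.
  by exists (s, [::]).
have := Hg; rewrite /reduced red_from_rcons => /and3P[Hg0 Hj _]; simpl in Hg0, Hj.
have [h0 [Hh0 Hh0s Hh0t Hh0g]] := IH Hg0.
set r := last s (map fst g0).
have Hrt : tgt (s, g0) = r by [].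
set h1 : arrow N := (j, [:: (r, k)]).
have Hh1 : reduced h1 by rewrite /reduced /h1 /= eq_sym Hj.
exists (Lg h1 h0).
have Ht : tgt (s, rcons g0 (j, k)) = j by rewrite /tgt map_rcons last_rcons.
split.
- apply: (reduced_arrow_mul (o := None)) => //.
  by move: Hh0; rewrite /reduced Hh0s.
- by rewrite /Lg src_arrow_mul Ht.
- rewrite /Lg tgt_arrow_mul /=.
  by case: h0 Hh0s Hh0t {Hh0 Hh0g} => a b /= -> <-.
rewrite /Lg -/(Lg h1 _).
rewrite -(LMfold (o := None)) //; last by rewrite Hh0t.
have -> : arrow_mul h0 (rcons g0 (j, k)) = (r, [:: (j, k)]).
  by rewrite arrow_mul_rcons; move: Hh0g; rewrite /Lg /= => ->.
rewrite Ht /Lg /= /h1.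
by rewrite !eqxx.
Qed.

Lemma Lg_inv_id g h V : reduced g -> reduced h -> g.1 = tgt h -> Lg h g = (tgt g, [::]) ->
  reduced V -> V.1 = tgt g -> Lg h (Lg g V) = V.
Proof.
move=> Hg Hh Hgh Hhg HV HVs.
rewrite [Lg g V]/Lg (LMfold (o := None)) //; last by move: HV; rewrite /reduced HVs.
rewrite Hhg arrow_mul_app; last by move: HV; rewrite /reduced HVs.
by case: V HVs {HV} => a b /= ->.
Qed.

Lemma Lg_inj g V Y : reduced g -> reduced V -> reduced Y -> V.1 = tgt g -> Y.1 = tgt g ->
  Lg g V = Lg g Y -> V = Y.
Proof.
move=> Hg HV HY HVs HYs E.
have [h [Hh Hhs Hht Hhg]] := exists_inv Hg.
by rewrite -(Lg_inv_id Hg Hh _ Hhg HV HVs) // -(Lg_inv_id Hg Hh _ Hhg HY HYs) // E.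
Qed.

End G.

Section P.
Variable N : nat.
Variable R : realType.
Variable p : 'I_N -> 'I_N -> bool -> R.
Implicit Types (x y g h X V Y Z : arrow N) (a b l : letter N) (w v : seq (letter N)) (t s : 'I_N).
Local Open Scope ring_scope.

Definition step x a : R := if a.1 != tgt x then p (tgt x) a.1 a.2 else 0.

Lemma big_tupleS (T : finType) n (F : n.+1.-tuple T -> R) :
  \sum_(u : n.+1.-tuple T) F u = \sum_(a : T) \sum_(t : n.-tuple T) F (cons_tuple a t).
Proof.
rewrite pair_big /=.
rewrite (reindex (fun q : T * n.-tuple T => cons_tuple q.1 q.2)) //=.
exists (fun u : n.+1.-tuple T => (thead u, behead_tuple u)) => [[a t] _ | u _] /=.
  by congr (_, _); apply: val_inj.
by apply: val_inj; rewrite /= [in RHS](tuple_eta u).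
Qed.

Lemma hit0 x y : hit_prob p x y 0 = (x == y)%:R.
Proof.
rewrite /hit_prob (big_pred1 [tuple]) /=; last by move=> u; rewrite /= (tuple0 u); apply/eqP.
by rewrite mul1r.
Qed.

Lemma hitS x y n : hit_prob p x y n.+1 =
  (x != y)%:R * \sum_(a : letter N) step x a * hit_prob p (mulgen x a) y n.
Proof.
rewrite /hit_prob big_tupleS.
case: (x =P y) => [->|Nxy] /=.
  rewrite mul0r; apply: big1 => a _; apply: big1 => t _.
  by rewrite /= eqxx /= mulr0.
rewrite mul1r; apply: eq_bigr => a _.
rewrite mulr_sumr; apply: eq_bigr => t _ /=.
have -> : (x != y) = true by apply/eqP.
by rewrite /step mulrA.
Qed.

Lemma hit_yy y n : hit_prob p y y n = (n == 0)%:R.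
Proof. by case: n => [|n]; rewrite ?hit0 ?hitS eqxx ?mul0r. Qed.

Lemma hit_transl g V Y n : reduced g -> reduced V -> reduced Y -> V.1 = tgt g -> Y.1 = tgt g ->
  hit_prob p (Lg g V) (Lg g Y) n = hit_prob p V Y n.
Proof.
move=> Hg + HY + HYs; elim: n V => [|n IH] V HV HVs;
  have EE : (Lg g V == Lg g Y) = (V == Y) by
    apply/idP/idP => /eqP E; apply/eqP; [exact: (Lg_inj Hg HV HY) | rewrite E].
  by rewrite !hit0 EE.
rewrite !hitS EE; congr (_ * _).
apply: eq_bigr => a _.
rewrite /step tgt_Lg //; case: ifP => Ha; last by rewrite !mul0r.
rewrite -LM // IH //; first exact: reduced_mulgen.
by rewrite src_mulgen.
Qed.

Lemma eq_ps_mul (f f' g g' : nat -> R) n : (forall m, f m = f' m) -> (forall m, g m = g' m) ->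
  ps_mul f g n = ps_mul f' g' n.
Proof. by move=> Hf Hg; apply: eq_bigr => m _; rewrite Hf Hg. Qed.

Lemma ps_mul_one_l (f : nat -> R) n : ps_mul (@ps_one R) f n = f n.
Proof.
rewrite /ps_mul big_ord_recl /ps_one /= mul1r subn0 big1 ?addr0 // => m _.
by rewrite mul0r.
Qed.

Lemma hit_cut (near : pred (arrow N)) y Z :
  (forall X, near X -> X != y /\ X != Z) ->
  (forall X a, near X -> a.1 != tgt X -> near (mulgen X a) \/ mulgen X a = y) ->
  forall n X, near X -> hit_prob p X Z n = ps_mul (hit_prob p X y) (hit_prob p y Z) n.
Proof.
move=> Hne Hst; elim=> [|n IH] X HX; have [Hy HZ] := Hne X HX.
  by rewrite /ps_mul big_ord1 !hit0 (negbTE Hy) (negbTE HZ) mul0r.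
rewrite hitS HZ mul1r /ps_mul big_ord_recl hit0 (negbTE Hy) mul0r add0r.
rewrite (eq_bigr (fun m : 'I_n.+1 => \sum_a step X a * hit_prob p (mulgen X a) y m
   * hit_prob p y Z (n - m))); last first.
  move=> m _; rewrite lift0 hitS Hy mul1r subSS mulr_suml //.
rewrite exchange_big /=; apply: eq_bigr => a _.
under eq_bigr => m _ do rewrite -mulrA. rewrite -mulr_sumr -/(ps_mul (hit_prob p (mulgen X a) y) (hit_prob p y Z) n).
rewrite /step; case: ifP => Ha; last by rewrite !mul0r.
congr (_ * _).
case: (Hst X a HX Ha) => [Hn|->]; first exact: IH.
by rewrite (eq_ps_mul _ (fun m => hit_yy y m) (fun m => erefl)) ps_mul_one_l.
Qed.


Lemma hit_unit_prod t u : red_from t None u -> forall n,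
  hit_prob p (t, [::]) (t, u) n =
  ps_prod [seq Rgen_coef p ta.1 ta.2 | ta <- factors t u] n.
Proof.
elim: u t => [|a u IH] t Hu n.
  by rewrite hit_yy.
have := Hu => /and3P[Ha _ Hu'].
set y : arrow N := (t, [:: a]).
pose near := fun X : arrow N => (X.1 == t) && (if X.2 is c :: _ then c != a else true).
rewrite (@hit_cut near y).
- apply: eq_ps_mul => m; first by [].
  have -> : hit_prob p y (t, a :: u) m = hit_prob p (Lg y (a.1, [::])) (Lg y (a.1, u)) m.
    by rewrite /Lg /= (arrow_mul_app (w := [:: a])).
  rewrite hit_transl //.
  + exact: IH (red_from_None Hu') m.
  + by rewrite /reduced /= Ha.
  + exact: red_from_None Hu'.
- move=> [s w] /andP[_ Hw]; split; apply/eqP => -[_ E]; subst w; move: Hw => /=; by rewrite eqxx.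
- move=> [s w] b /andP[/eqP Es Hw] Hb; simpl in Es, Hw; subst s.
  case: w Hw Hb => [|c w] Hw Hb.
    rewrite mulgen_nil; case: (b =P a) => [->|Nba]; first by right.
    by left; rewrite /near /= eqxx; apply/eqP.
  case/lastP: w Hw Hb => [|w0 l] Hw Hb.
    case: c Hw Hb => q k Hw Hb.
    rewrite -[[:: (q, k)]]/(rcons [::] (q, k)) mulgen_rcons.
    case: ifP => _; last by left; rewrite /near /= eqxx.
    case: ifP => _; first by left; rewrite /near /= eqxx.
    case: (b =P a) => [->|Nba]; first by right.
    by left; rewrite /near /= eqxx; apply/eqP.
  case: l Hw Hb => q k Hw Hb.
  rewrite -rcons_cons mulgen_rcons.
  by left; case: ifP => _; [case: ifP => _|]; rewrite /near /= eqxx.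
- by rewrite /near /= eqxx.
Qed.

Lemma coef_main (w1 w2 : arrow N) u : reduced w1 -> red_from (tgt w1) None u ->
  arrow_mul w1 u = w2 -> forall n,
  calR_coef p w1 w2 n = ps_prod [seq Rgen_coef p ta.1 ta.2 | ta <- factors (tgt w1) u] n.
Proof.
move=> Hw1 Hu <- n.
rewrite /calR_coef -(hit_unit_prod Hu n).
have -> : w1 = Lg w1 (tgt w1, [::]) by [].
rewrite -/(Lg w1 (tgt w1, u)) hit_transl //.
Qed.

End P.

Section A.
Variable R : realType.
Local Open Scope classical_set_scope.
Local Open Scope ring_scope.
Implicit Types (a b : nat -> R).

Definition nice a := (forall n, 0 <= a n) /\ (forall M, \sum_(n < M) a n <= 1).

Lemma seriesO (u : nat -> R) n : series u n = \sum_(k < n) u k.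
Proof. by rewrite /series /= big_mkord. Qed.

Lemma psum_mul a b M : \sum_(n < M) ps_mul a b n = \sum_(i < M) a i * \sum_(j < M - i) b j.
Proof.
elim: M => [|M IH]; first by rewrite !big_ord0.
rewrite big_ord_recr IH /= [RHS]big_ord_recr /= subSnn big_ord1.
rewrite [in RHS](eq_bigr (fun i : 'I_M => a i * \sum_(j < (M - i)%N) b j + a i * b (M - i)%N)); last first.
  move=> i _; rewrite subSn; last exact: ltnW.
  by rewrite big_ord_recr mulrDr.
rewrite big_split /= -addrA; congr (_ + _).
by rewrite /ps_mul big_ord_recr /= subnn.
Qed.

Lemma nice_one : nice (@ps_one R).
Proof.
split=> [n|[|M]]; first by rewrite /ps_one ler0n.
  by rewrite big_ord0 ler01.
rewrite big_ord_recl /ps_one /= big1 ?addr0 // => i _.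
Qed.

Lemma nice_mul a b : nice a -> nice b -> nice (ps_mul a b).
Proof.
move=> [a0 a1] [b0 b1]; split=> [n|M].
  by apply: sumr_ge0 => m _; apply: mulr_ge0.
rewrite psum_mul; apply: le_trans (a1 M).
apply: ler_sum => i _; rewrite -[leRHS]mulr1; apply: ler_wpM2l => //.
Qed.

Lemma nice_abs_le a lam n : nice a -> `|lam| <= 1 -> `|ps_terms a lam n| <= a n.
Proof.
move=> [a0 _] hl; rewrite /ps_terms normrM normrX ger0_norm //.
rewrite -[leRHS]mulr1; apply: ler_wpM2l => //.
by apply: exprn_ile1.
Qed.

Lemma nice_normed_cvg a lam : nice a -> `|lam| <= 1 -> cvgn [normed series (ps_terms a lam)].
Proof.
move=> ha hl; apply: nondecreasing_is_cvgn.
  move=> m n mn; rewrite /normed_series_of /series /=.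
  by apply: (nondecreasing_series (P := xpredT) (m := 0)) => // k _ _; exact: normr_ge0.
exists 1 => _ [n _ <-]; rewrite /normed_series_of /= seriesO.
apply: le_trans (ha.2 n); apply: ler_sum => k _; exact: nice_abs_le.
Qed.

Lemma nice_cvg a lam : nice a -> `|lam| <= 1 -> cvgn (series (ps_terms a lam)).
Proof. by move=> ha hl; apply: normed_cvg; apply: nice_normed_cvg. Qed.


Lemma cvg_half (u : nat -> R) (l : R) : u @ \oo --> l -> (fun n => u n./2) @ \oo --> l.
Proof.
move=> /cvgrPdist_le H; apply/cvgrPdist_le => e e0.
have [N _ HN] := H e e0; exists N.*2 => // n /= Hn.
apply: HN => /=.
by rewrite -(half_double N); apply: half_leq.
Qed.

Lemma terms_mul a b lam n :
  ps_terms (ps_mul a b) lam n = ps_mul (ps_terms a lam) (ps_terms b lam) n.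
Proof.
rewrite /ps_terms /ps_mul mulr_suml; apply: eq_bigr => m _.
rewrite -[in lam ^+ n](subnKC (ltnSE (ltn_ord m))) exprD.
by rewrite mulrACA.
Qed.

Lemma cauchy_bound a b lam M (A := ps_terms a lam) (B := ps_terms b lam)
  (sa := series (fun k => `|A k|)) (sb := series (fun k => `|B k|)) :
  nice a -> nice b -> `|lam| <= 1 ->
  `|series A M * series B M - series (ps_terms (ps_mul a b) lam) M|
     <= sa M * sb M - sa M./2 * sb M./2.
Proof.
move=> ha hb hl.
have EC : series (ps_terms (ps_mul a b) lam) M = \sum_(i < M) A i * series B (M - i)%N.
  rewrite seriesO (eq_bigr (fun k : 'I_M => ps_mul A B k) (fun k _ => terms_mul a b lam k)) psum_mul.
  by apply: eq_bigr => i _; rewrite seriesO.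
have ED : series A M * series B M - series (ps_terms (ps_mul a b) lam) M =
    \sum_(i < M) A i * (series B M - series B (M - i)%N).
  rewrite EC seriesO mulr_suml -sumrB; apply: eq_bigr => i _.
  by rewrite mulrBr.
rewrite ED.
apply: le_trans (ler_norm_sum _ _ _) _.
apply: le_trans (_ : \sum_(i < M) `|A i| * (sb M - sb (M - i)%N) <= _).
  apply: ler_sum => i _; rewrite normrM; apply: ler_wpM2l => //.
  rewrite sub_series_geq ?leq_subr // /sb sub_series_geq ?leq_subr //.
  exact: ler_norm_sum.
rewrite (eq_bigr (fun i : 'I_M => `|A i| * sb M - `|A i| * sb (M - i)%N));
  last by move=> i _; rewrite mulrBr.
rewrite sumrB -mulr_suml. have -> : \sum_(i < M) `|A i| = sa M by rewrite /sa seriesO.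
rewrite lerD2l lerN2.
set K := M./2.
have HK : (K.*2 <= M)%N by rewrite /K -[X in (_ <= X)%N](odd_double_half M) leq_addl.
pose v i := `|A i| * sb (M - i)%N.
have v0 : forall i, 0 <= v i.
  move=> i; apply: mulr_ge0 => //; rewrite /sb seriesO; apply: sumr_ge0 => *; exact: normr_ge0.
have -> : \sum_(i < M) `|A i| * sb (M - i)%N = series v M by rewrite seriesO.
apply: le_trans (_ : series v K <= _); last first.
  apply: (nondecreasing_series (P := xpredT) (m := 0)) => //.
  by apply: leq_trans HK; rewrite -addnn leq_addr.
rewrite seriesO /sa seriesO mulr_suml; apply: ler_sum => i _.
rewrite /v; apply: ler_wpM2l => //.
apply: (nondecreasing_series (P := xpredT) (m := 0)) => //.
have := ltn_ord i; move: HK; rewrite -addnn => HK Hi.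
by rewrite leq_subRL; [ apply: leq_trans HK; rewrite leq_add2r; exact: ltnW | apply: leq_trans (ltnW Hi) _; apply: leq_trans (leq_addl _ _) HK].
Qed.


Lemma cauchy a b lam : nice a -> nice b -> `|lam| <= 1 ->
  series (ps_terms (ps_mul a b) lam) @ \oo --> ps_eval a lam * ps_eval b lam.
Proof.
move=> ha hb hl.
set A := ps_terms a lam; set B := ps_terms b lam; set C := ps_terms (ps_mul a b) lam.
have cA : cvgn (series A) by exact: nice_cvg.
have cB : cvgn (series B) by exact: nice_cvg.
have nA : cvgn (series (fun k => `|A k|)) by exact: nice_normed_cvg.
have nB : cvgn (series (fun k => `|B k|)) by exact: nice_normed_cvg.
set sa := series (fun k => `|A k|); set sb := series (fun k => `|B k|).
pose P := fun M => sa M * sb M.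
have HP : P @ \oo --> limn sa * limn sb by exact: cvgM.
have HPh := cvg_half HP.
have HD : (fun M => P M - P M./2) @ \oo --> 0.
  by rewrite -(subrr (limn sa * limn sb)); apply: cvgB.
have HE : (fun M => series A M * series B M - series C M) @ \oo --> 0.
  apply/cvgr0Pnorm_le => e e0.
  move/cvgr0Pnorm_le: HD => /(_ e e0); apply: filterS => M /= HM.
  apply: le_trans (cauchy_bound M ha hb hl) _.
  by apply: le_trans HM; exact: ler_norm.
have -> : series C = (fun M => series A M * series B M - (series A M * series B M - series C M)).
  by apply/funext => M; rewrite opprB addrC subrK.
rewrite -[X in _ --> X]subr0.
apply: cvgB => //.
exact: cvgM.
Qed.

Lemma ps_eval_mul a b lam : nice a -> nice b -> `|lam| <= 1 ->
  ps_eval (ps_mul a b) lam = ps_eval a lam * ps_eval b lam.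
Proof. by move=> ha hb hl; apply: cvg_lim => //; apply: cauchy. Qed.

Lemma ps_eval_one lam : ps_eval (@ps_one R) lam = 1.
Proof.
rewrite /ps_eval; apply: cvg_lim => //; apply: cvg_near_cst.
exists 1%N => // n /= Hn; rewrite seriesO; case: n Hn => // n _.
rewrite big_ord_recl /ps_terms /ps_one /= mul1r expr0 big1 ?addr0 // => i _.
by rewrite mul0r.
Qed.

Lemma eval_prod (T : Type) (F : T -> nat -> R) (L : seq T) lam :
  (forall t, nice (F t)) -> `|lam| <= 1 ->
  nice (ps_prod (map F L)) /\ ps_eval (ps_prod (map F L)) lam = \prod_(t <- L) ps_eval (F t) lam.
Proof.
move=> hF hl; elim: L => [|t L [IH1 IH2]].
  by split; [exact: nice_one | rewrite big_nil ps_eval_one].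
have -> : ps_prod (map F (t :: L)) = ps_mul (F t) (ps_prod (map F L)) by [].
split; first exact: nice_mul.
by rewrite big_cons ps_eval_mul // IH2.
Qed.

End A.

Section H.
Local Open Scope ring_scope.

Lemma step_ge0 (R : realType) (N : nat) (p : 'I_N -> 'I_N -> bool -> R)
  (hp : forall (i j : 'I_N) (k : bool), i != j -> 0 < p i j k < 1) x a : 0 <= step p x a.
Proof.
rewrite /step; case: ifP => H //.
have Hij : tgt x != a.1 by rewrite eq_sym.
have /andP[h _] := hp _ _ a.2 Hij; exact: ltW h.
Qed.

Lemma step_sum (R : realType) (N : nat) (p : 'I_N -> 'I_N -> bool -> R)
  (hsum : forall i : 'I_N, \sum_(j < N | j != i) (p i j true + p i j false) = 1) x :
  \sum_(a : letter N) step p x a = 1.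
Proof.
rewrite (eq_bigr (fun q : letter N => step p x (q.1, q.2))); last by case.
rewrite -(pair_bigA _ (fun j k => step p x (j, k))) /=.
rewrite -(hsum (tgt x)) [RHS]big_mkcond; apply: eq_bigr => j _.
rewrite big_bool /step /=; case: ifP => _ //.
by rewrite addr0.
Qed.

Lemma hit_nice (R : realType) (N : nat) (p : 'I_N -> 'I_N -> bool -> R)
  (hp : forall (i j : 'I_N) (k : bool), i != j -> 0 < p i j k < 1)
  (hsum : forall i : 'I_N, \sum_(j < N | j != i) (p i j true + p i j false) = 1) x y :
  nice (hit_prob p x y).
Proof.
split.
  move=> n; apply: sumr_ge0 => s _; apply: mulr_ge0 => //.
  elim: (tval s) x => [|a w IH] x' /=; first exact: ler01.
  apply: mulr_ge0; last exact: IH.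
  exact: (step_ge0 hp x' a).
move=> M; elim: M x => [|M IH] x; first by rewrite big_ord0 ler01.
rewrite big_ord_recl hit0; case: (x =P y) => [->|Nxy].
  rewrite big1 ?addr0 // => i _.
  by rewrite lift0 hitS eqxx mul0r.
have Hne : (x != y) by apply/eqP.
rewrite add0r (eq_bigr (fun i : 'I_M => \sum_a step p x a * hit_prob p (mulgen x a) y i));
  last by move=> i _; rewrite lift0 hitS Hne mul1r.
rewrite exchange_big /=.
apply: le_trans (_ : \sum_a step p x a * 1 <= _).
  apply: ler_sum => a _; rewrite -mulr_sumr; apply: ler_wpM2l; [exact: step_ge0 | exact: IH].
by rewrite (eq_bigr _ (fun a _ => mulr1 _)) step_sum.
Qed.

End H.

Local Open Scope ring_scope.

Theorem lemma6p2 (R : realType) (N : nat) (HN : (3 <= N)%N)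
  (p : 'I_N -> 'I_N -> bool -> R)
  (hp : forall (i j : 'I_N) (k : bool), i != j -> 0 < p i j k < 1)
  (hsum : forall i : 'I_N, \sum_(j < N | j != i) (p i j true + p i j false) = 1)
  (i : 'I_N) (w1 w2 : arrow N) (u : seq (letter N))
  (hw1 : reduced w1) (hw2 : reduced w2)
  (hs1 : src w1 = i) (hs2 : src w2 = i) (hne : w1 != w2)
  (hu : red_from (tgt w1) None u) (hmul : arrow_mul w1 u = w2) :
  (0 < size u)%N /\
  (forall n : nat,
     calR_coef p w1 w2 n =
     ps_prod [seq Rgen_coef p ta.1 ta.2 | ta <- factors (tgt w1) u] n) /\
  (forall lam : R, `|lam| <= 1 ->
     cvgn (series (ps_terms (calR_coef p w1 w2) lam)) /\
     (forall ta, ta \in factors (tgt w1) u ->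
        cvgn (series (ps_terms (Rgen_coef p ta.1 ta.2) lam))) /\
     ps_eval (calR_coef p w1 w2) lam =
     \prod_(ta <- factors (tgt w1) u) ps_eval (Rgen_coef p ta.1 ta.2) lam).
Proof.
have Hsz : (0 < size u)%N.
  case: u hu hmul => // _ E.
  by move: hne; rewrite -E eqxx.
have Hc := coef_main p hw1 hu hmul.
have HF : forall ta : 'I_N * letter N, nice (Rgen_coef p ta.1 ta.2).
  by move=> ta; apply: hit_nice.
split=> //; split=> // lam hl.
have Efun : calR_coef p w1 w2 = ps_prod [seq Rgen_coef p ta.1 ta.2 | ta <- factors (tgt w1) u].
  by apply/funext => n; exact: Hc.
have [Hn He] := eval_prod (F := fun ta : 'I_N * letter N => Rgen_coef p ta.1 ta.2) (factors (tgt w1) u) HF hl.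
split; first by rewrite Efun; exact: nice_cvg Hn hl.
split; first by move=> ta _; exact: nice_cvg (HF ta) hl.
by rewrite Efun He.
Qed.
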